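(* Let $k\ge3$ and let $\{S_n\}$ be a perturbed sequence of weak shifts of degree $d$ corresponding to a uniformly bounded sequence of weak shift-like maps of degree $\tilde d\le d-2$. Let $G_n(z)=d^{-n}\log^+\|S(n)(z)\|_{\sup}$ and let $G$ be the function equal to $\lim_n G_n$ on $U^+$ and to $0$ on $\mathbb{C}^k\setminus U^+$. Then $\{G_n\}$ converges to $G$ uniformly on compact subsets of $\mathbb{C}^k$.
   Context: Let $Q_m(z)=z^m$ and $\mathbf H_d(w_1,\dots,w_{k-1})=\sum_{i=1}^{k-1}w_i^d$. A uniformly bounded sequence of weak shift-like maps of degree $\tilde d\ge1$ is a sequence $\mathsf S_n(z)=(z_2,\dots,z_k,a_nz_1+p_n(z_2,\dots,z_k))$ with $\deg(a_nz_1+p_n)=\tilde d$, $p_n=\sum_i\alpha_{i,n}\mathbf z^i$, and constants $\tilde m,\tilde M>0$ with $\tilde m<|a_n|<\tilde M$, $|\alpha_{i,n}|<\tilde M$. The associated perturbed sequence of weak shifts of degree $d\ge\tilde d+2$ is $S_n(z)=\mathsf S_n(z)+(0,\dots,0,Q_{d-1}(z_2),\mathbf H_d(z_2,\dots,z_k))$. $S(n)=S_n\circ\cdots\circ S_1$; $\|\cdot\|_{\sup}$ is the sup-norm; $\log^+=\max\{\log,0\}$. $U^+=\{z\in\mathbb{C}^k:\overline{S(n)}([z:1])\to[0:\cdots:0:1:0]\}$ (extension to $\mathbb{P}^k$; limit point has only the $k$-th homogeneous coordinate nonzero); the limit $\lim_nG_n$ exists on $U^+$. *)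

(* Defs.v *)
From HB Require Import structures.
From mathcomp Require Import all_boot all_order all_algebra.
From mathcomp Require Import all_classical all_reals all_analysis.
From mathcomp Require Import complex.
Import Order.TTheory GRing.Theory Num.Theory.
Import numFieldNormedType.Exports.
Local Open Scope classical_set_scope.
Local Open Scope ring_scope.

Set Implicit Arguments. Unset Strict Implicit. Unset Printing Implicit Defensive.

Section WeakShifts.
Variable R : realType.
Local Notation C := ((R[i])^o).
Variable k : nat.

(* 0-based access to the coordinates of z in C^k : z_{j+1} = coord z j;
   out-of-range indices give 0 (never used below for j >= k). *)
Definition coord (z : 'I_k -> C) (j : nat) : C :=
  if insub j is Some i then z i else 0.

(* p(z_2,...,z_k) = sum_e alpha_e z_2^{e_1} ... z_k^{e_{k-1}},
   monomials with every exponent <= dt (this covers all polynomials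
   of degree <= dt in k-1 variables). *)
Definition pval (dt : nat) (alpha : {ffun 'I_k.-1 -> 'I_dt.+1} -> C)
  (z : 'I_k -> C) : C :=
  \sum_(e : {ffun 'I_k.-1 -> 'I_dt.+1})
     alpha e * \prod_(i : 'I_k.-1) coord z (val i).+1 ^+ e i.

Definition ws_deg (dt : nat) (a : C) (alpha : {ffun 'I_k.-1 -> 'I_dt.+1} -> C)
  : nat :=
  maxn (if a != 0 then 1 else 0)
       (\max_(e | alpha e != 0) \sum_(i : 'I_k.-1) (val (e i))).

(* weak shift-like map  Sf(z) = (z_2,...,z_k, a z_1 + p(z_2,...,z_k)) *)
Definition weak_shift_like (dt : nat) (a : C)
  (alpha : {ffun 'I_k.-1 -> 'I_dt.+1} -> C) (z : 'I_k -> C) : 'I_k -> C :=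
  fun i => if ((val i).+1 < k)%N then coord z (val i).+1
           else a * coord z 0 + pval alpha z.

(* perturbed weak shift of degree d:
   S(z) = Sf(z) + (0,...,0, Q_{d-1}(z_2), H_d(z_2,...,z_k)) *)
Definition weak_shift (d dt : nat) (a : C)
  (alpha : {ffun 'I_k.-1 -> 'I_dt.+1} -> C) (z : 'I_k -> C) : 'I_k -> C :=
  fun i => weak_shift_like a alpha z i
    + (if (val i).+2 == k then coord z 1 ^+ d.-1
       else if (val i).+1 == k then \sum_(1 <= j < k) coord z j ^+ d
       else 0).

Fixpoint comp_seq (S : nat -> ('I_k -> C) -> ('I_k -> C)) (n : nat)
  (z : 'I_k -> C) : 'I_k -> C :=
  match n with
  | 0 => z
  | n'.+1 => S n (comp_seq S n' z)
  end.

Definition sup_norm (z : 'I_k -> C) : R := \big[Num.max/0]_(i : 'I_k) ComplexField.Normc.normc (z i).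

Definition logp (x : R) : R := Num.max (ln x) 0.

Definition Gn (S : nat -> ('I_k -> C) -> ('I_k -> C)) (d n : nat)
  (z : 'I_k -> C) : R :=
  (d%:R ^+ n)^-1 * logp (sup_norm (comp_seq S n z)).

(* U^+ : [S(n)(z) : 1] -> [0:...:0:1:0] in P^k, written in the affine chart
   w_k <> 0 around that point: eventually the k-th coordinate w_k of
   S(n)(z) is nonzero, and all ratios w_j / w_k (j <> k) and 1 / w_k
   tend to 0. *)
Definition Uplus (S : nat -> ('I_k -> C) -> ('I_k -> C)) (z : 'I_k -> C)
  : Prop :=
  (\forall n \near \oo, coord (comp_seq S n z) k.-1 != 0) /\
  (forall j : 'I_k, val j != k.-1 ->
     (fun n => comp_seq S n z j / coord (comp_seq S n z) k.-1) @ \oo --> (0 : C)) /\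
  ((fun n => (coord (comp_seq S n z) k.-1)^-1) @ \oo --> (0 : C)).

Definition Glim (S : nat -> ('I_k -> C) -> ('I_k -> C)) (d : nat)
  (z : 'I_k -> C) : R :=
  if `[< Uplus S z >] then limn (fun n => Gn S d n z) else 0.

End WeakShifts.

(* Main.v *)
Require Import Defs.
From HB Require Import structures.
From mathcomp Require Import all_boot all_order all_algebra.
From mathcomp Require Import all_classical all_reals all_analysis.
From mathcomp Require Import complex.
From mathcomp Require Import ring lra zify.
Import Order.TTheory GRing.Theory Num.Theory.
Import numFieldNormedType.Exports.
Local Open Scope classical_set_scope.
Local Open Scope ring_scope.
Set Implicit Arguments. Unset Strict Implicit. Unset Printing Implicit Defensive.
Import Defs.
Section SeqLemma.
Variable R : realType.

Lemma seq_main (d : nat) (lam : nat -> R) (P : nat -> bool) (c1 c2 c3 : R) :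
  (3 <= d)%N -> 0 <= c1 -> 0 <= c2 -> 0 <= c3 ->
  (forall n, 0 <= lam n) ->
  (forall n, P n -> P n.+1) ->
  (forall n, P n -> `|lam n.+1 - d%:R * lam n| <= c3) ->
  (forall n, ~~ P n.+1 -> lam n.+1 <= c2 + (d%:R - 1) * lam n) ->
  (forall n, lam n.+1 <= c1 + d%:R * lam n) ->
  exists L : R, (fun n => (d%:R ^+ n)^-1 * lam n) @ \oo --> L /\
    (forall n, `|(d%:R ^+ n)^-1 * lam n - L| <=
        ((d%:R - 1) / d%:R) ^+ n * (lam 0 + c1 + c2 + c3)) /\
    ((forall n, ~~ P n) -> L = 0).
Proof.
move=> d3 c1p c2p c3p lam0 HP Hin Hnot Hall.
set D : R := d%:R.
have D3 : 3 <= D by rewrite /D (ler_nat R 3 d).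
have D0 : 0 < D by lra.
set G := fun n => (D ^+ n)^-1 * lam n.
set rho := (D - 1) / D.
have rho0 : 0 <= rho by rewrite /rho divr_ge0 //; lra.
have rho1 : rho <= 1 by rewrite /rho ler_pdivrMr //; lra.
have Dn0 n : 0 < D ^+ n by apply: exprn_gt0.
have Dnv0 n : 0 < (D ^+ n)^-1 by rewrite invr_gt0.
have G0 n : 0 <= G n by rewrite /G mulr_ge0 // ltW.
have claimA : forall n, ~~ P n -> lam n + c2 <= (D - 1) ^+ n * (lam 0 + c2).
  elim => [|n IH] hn; first by rewrite expr0 mul1r.
  have hn' : ~~ P n by apply: contra hn; apply: HP.
  have h := Hnot n hn.
  have h2 : 2 * c2 <= (D - 1) * c2 by rewrite ler_wpM2r //; lra.
  apply: (@le_trans _ _ ((D - 1) * (lam n + c2))); first by lra.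
  by rewrite exprS -mulrA ler_wpM2l ?IH //; lra.
have F1 : forall n, ~~ P n -> G n <= rho ^+ n * (lam 0 + c2).
  move=> n hn; rewrite /G /rho expr_div_n mulrAC [_ * (D ^+ n)^-1]mulrC.
  apply: ler_wpM2l; first exact: ltW.
  apply: le_trans (claimA n hn); lra.
have F2 : forall m n, (n <= m)%N -> (D ^+ m)^-1 <= rho ^+ n.
  move=> m n nm; rewrite /rho expr_div_n.
  apply: (@le_trans _ _ (D ^+ n)^-1).
    rewrite lef_pV2 ?posrE //; apply: ler_weXn2l => //; lra.
  rewrite -[X in X <= _]mul1r; apply: ler_wpM2r; first exact: ltW.
  by apply: exprn_ege1; lra.
have F3 : forall m n, (n <= m)%N -> rho ^+ m <= rho ^+ n.
  by move=> m n nm; apply: ler_wiXn2l.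
have rhoW n : 0 <= rho ^+ n by apply: exprn_ge0.
have cvgrho : (fun n => rho ^+ n) @ \oo --> 0.
  by apply: cvg_expr; rewrite ger0_norm //; rewrite /rho ltr_pdivrMr //; lra.
have Gstep : forall n, P n -> `|G n.+1 - G n| <= c3 * (D ^+ n.+1)^-1.
  move=> n hn; have -> : G n.+1 - G n = (D ^+ n.+1)^-1 * (lam n.+1 - D * lam n).
    have h1 : D ^+ n != 0 by rewrite gt_eqF.
    have h2 : D != 0 by rewrite gt_eqF.
    by rewrite /G exprS; field; rewrite h1 h2.
  rewrite normrM ger0_norm; last exact: ltW.
  by rewrite mulrC; apply: ler_wpM2r; [exact: ltW | exact: Hin].
case: (pselect (exists n, P n)) => [exP|noP]; last first.
  have noP' : forall n, ~~ P n by move=> n; apply/negP => pn; apply: noP; exists n.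
  exists 0; split; last split => //.
  - have := @squeeze_cvgr nat \oo _ R (cst 0) (fun n => rho ^+ n * (lam 0 + c2)) G.
    apply.
    + by near=> n; rewrite /= G0 F1.
    + exact: cvg_cst.
    + by rewrite -(mul0r (lam 0 + c2)); exact: cvgMr_tmp.
  - move=> n; rewrite subr0 ger0_norm; last exact: (G0 n).
    apply: le_trans (F1 n (noP' n)) _; apply: ler_wpM2l => //; lra.
pose tau := ex_minn exP.
have [Ptau tau_min] : P tau /\ (forall n, P n -> (tau <= n)%N).
  by rewrite /tau; case: ex_minnP => m pm mmin; split.
have Hpost : forall m, P (m + tau)%N.
  elim => [|m IH]; first by rewrite add0n.
  by rewrite addSn; apply: HP.
have Hpre : forall n, (n < tau)%N -> ~~ P n.
  move=> n nt; apply/negP => pn; have := tau_min n pn; by rewrite leqNgt nt.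
pose u := fun m => c3 * (D ^+ m)^-1.
have u0 m : 0 <= u m by rewrite /u mulr_ge0 // ltW.
have Dstep m : u m.+1 *+ 2 <= u m.
  have e : (D ^+ m)^-1 = D * (D ^+ m.+1)^-1.
    by rewrite exprS invfM mulrA divff ?mul1r // gt_eqF.
  have h2 : 2 * u m.+1 <= D * u m.+1 by apply: ler_wpM2r => //; lra.
  rewrite /u e mulrCA -/(u m.+1) mulr2n; lra.
have ucv : u @ \oo --> 0.
  have -> : u = (fun m => (D^-1) ^+ m * c3).
    by apply: funext => m; rewrite /u exprVn mulrC.
  rewrite -(mul0r c3); apply: cvgMr_tmp; apply: cvg_expr.
  rewrite ger0_norm; last by rewrite invr_ge0 ltW.
  by rewrite invf_lt1 //; lra.
have ucvs : (fun m => u (m + tau)%N) @ \oo --> 0.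
  by rewrite -(cvg_shiftn tau) in ucv.
set g := fun m => G (m + tau)%N + u (m + tau)%N.
set h := fun m => G (m + tau)%N - u (m + tau)%N.
have Gst m : - u (m + tau)%N.+1 <= G (m + tau)%N.+1 - G (m + tau)%N <= u (m + tau)%N.+1.
  by rewrite -ler_norml; apply: Gstep; apply: Hpost.
have gdec : nonincreasing_seq g.
  apply/nonincreasing_seqP => m; rewrite /g addSn.
  have := Gst m; have := Dstep (m + tau)%N; move=> /= a /andP[b c]; lra.
have hinc : nondecreasing_seq h.
  apply/nondecreasing_seqP => m; rewrite /h addSn.
  have := Gst m; have := Dstep (m + tau)%N; move=> /= a /andP[b c]; lra.
have gcv : cvgn g.
  apply: nonincreasing_is_cvgn => //; exists 0 => _ [m _ <-].
  by rewrite /g addr_ge0.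
set L := limn g.
have hcvL : h @ \oo --> L.
  have -> : h = (fun m => g m - u (m + tau)%N *+ 2).
    by apply: funext => m; rewrite /h /g mulr2n opprD addrA addrK.
  rewrite -[L]subr0 -(mul0rn _ 2); apply: cvgB => //; apply: cvgMn => //.
have GsL : (fun m => G (m + tau)%N) @ \oo --> L.
  have -> : (fun m => G (m + tau)%N) = (fun m => g m - u (m + tau)%N).
    by apply: funext => m; rewrite /g addrK.
  by rewrite -[L]subr0; apply: cvgB.
have GL : G @ \oo --> L by rewrite -(cvg_shiftn tau).
have hL : forall m, h m <= L.
  have <- : limn h = L by apply: cvg_lim.
  by apply: nondecreasing_cvgn_le => //; apply/cvg_ex; exists L.
have gL : forall m, L <= g m by apply: nonincreasing_cvgn_ge.
exists L; split => //; split; last first.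
  by move=> allP; move: (allP tau); rewrite Ptau.
move=> n; rewrite -/(G n).
have Wge : 0 <= lam 0 + c1 + c2 + c3 by have := lam0 0; lra.
case: (leqP tau n) => [tn|nt].
  have := hL (n - tau)%N; have := gL (n - tau)%N; rewrite /g /h subnK //.
  move=> a b; have : u n <= rho ^+ n * c3.
    by rewrite /u mulrC; apply: ler_wpM2r => //; apply: F2.
  have : rho ^+ n * c3 <= rho ^+ n * (lam 0 + c1 + c2 + c3).
    by apply: ler_wpM2l => //; have := lam0 0; lra.
  move=> c e; rewrite ler_norml; apply/andP; split; lra.
have tpos : (0 < tau)%N by apply: leq_ltn_trans nt.
move: (tpos) => /prednK tS.
set t := tau.-1 in tS.
have nt' : (n <= t)%N by rewrite -ltnS tS.
have nPt : ~~ P t by apply: Hpre; rewrite -tS.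
have Gtau : G tau <= c1 * (D ^+ tau)^-1 + G t.
  have e : G tau = (D ^+ tau)^-1 * lam tau by [].
  have e2 : (D ^+ tau)^-1 * (c1 + D * lam t) = c1 * (D ^+ tau)^-1 + G t.
    have h1 : D ^+ t != 0 by rewrite gt_eqF.
    have h2 : D != 0 by rewrite gt_eqF.
    by rewrite /G -tS exprS; field; rewrite h1 h2.
  rewrite e -e2; apply: ler_wpM2l; first exact: ltW.
  by rewrite -tS; apply: Hall.
have := hL 0%N; have := gL 0%N; rewrite /g /h add0n => gl hl.
have a1 := F1 n (Hpre n nt).
have a2 := F1 t nPt.
have a3 : rho ^+ t * (lam 0 + c2) <= rho ^+ n * (lam 0 + c2).
  by apply: ler_wpM2r; [have := lam0 0; lra | apply: F3].
have a4 : c1 * (D ^+ tau)^-1 <= c1 * rho ^+ n.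
  by apply: ler_wpM2l => //; apply: F2; apply: ltnW.
have a5 : u tau <= c3 * rho ^+ n.
  by apply: ler_wpM2l => //; apply: F2; apply: ltnW.
have a6 := G0 n.
have a7 := G0 tau.
have a8 := G0 t.
have a9 : rho ^+ n * (lam 0 + c1 + c2 + c3) =
   rho ^+ n * (lam 0 + c2) + c1 * rho ^+ n + c3 * rho ^+ n by ring.
have a10 : 0 <= c3 * rho ^+ n by apply: mulr_ge0.
rewrite a9 ler_norml; apply/andP; have a11 : 0 <= c1 * rho ^+ n by apply: mulr_ge0.
split; lra.
Unshelve. all: by end_near. Qed.
End SeqLemma.
Section Basic.
Variable R : realType.
Local Notation nc := (@ComplexField.Normc.normc R).

Lemma nc_ge0 (x : R[i]) : 0 <= nc x.
Proof. by case: x => a b; exact: sqrtr_ge0. Qed.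

Lemma ncM (x y : R[i]) : nc (x * y) = nc x * nc y.
Proof. exact: ComplexField.Normc.normcM. Qed.

Lemma ncD (x y : R[i]) : nc (x + y) <= nc x + nc y.
Proof. exact: le_normcD. Qed.

Lemma ncX (x : R[i]) n : nc (x ^+ n) = nc x ^+ n.
Proof.
elim: n => [|n IH]; first by rewrite !expr0 ComplexField.Normc.normc1.
by rewrite !exprS ncM IH.
Qed.

Lemma nc0 : nc 0 = 0.
Proof. exact: ComplexField.Normc.normc0. Qed.

Lemma nc_sum (I : Type) (r : seq I) (P : pred I) (F : I -> R[i]) :
  nc (\sum_(i <- r | P i) F i) <= \sum_(i <- r | P i) nc (F i).
Proof.
apply: (big_ind2 (fun a b => nc a <= b)) => //.
- by rewrite nc0.
- move=> x1 x2 y1 y2 h1 h2; apply: le_trans (ncD _ _) _; exact: lerD.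
Qed.

Lemma nc_prod (I : Type) (r : seq I) (P : pred I) (F : I -> R[i]) :
  nc (\prod_(i <- r | P i) F i) = \prod_(i <- r | P i) nc (F i).
Proof.
apply: (big_ind2 (fun a b => nc a = b)) => //.
- exact: ComplexField.Normc.normc1.
- by move=> x1 x2 y1 y2 <- <-; rewrite ncM.
Qed.

Variable k : nat.
Implicit Types z : 'I_k -> (R[i])^o.

Lemma coord_le_sup z j : nc (coord z j) <= sup_norm z.
Proof.
rewrite /coord; case: insubP => [i _ _|_].
  by rewrite /sup_norm; apply: le_bigmax.
rewrite nc0 /sup_norm; exact: bigmax_ge_id.
Qed.

Lemma sup_ge0 z : 0 <= sup_norm z.
Proof. exact: bigmax_ge_id. Qed.

Lemma sup_le z X : 0 <= X -> (forall j, (j < k)%N -> nc (coord z j) <= X) ->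
  sup_norm z <= X.
Proof.
move=> X0 h; apply: bigmax_le => // i _.
have := h (val i) (ltn_ord i); rewrite /coord.
by case: insubP => [i' _ /val_inj -> //|]; rewrite ltn_ord.
Qed.

Lemma coord_ord z (i : 'I_k) : coord z (val i) = z i.
Proof. by rewrite /coord; case: insubP => [i' _ /val_inj -> //|]; rewrite ltn_ord. Qed.

End Basic.
Section Coords.
Variable R : realType.
Variables (k d dt : nat).
Hypothesis k3 : (3 <= k)%N.
Variables (a0 : (R[i])^o) (al : {ffun 'I_k.-1 -> 'I_dt.+1} -> (R[i])^o).
Implicit Types z : 'I_k -> (R[i])^o.

Lemma cw_low z j : (j.+2 < k)%N ->
  coord (weak_shift d a0 al z) j = coord z j.+1.
Proof.
move=> jk; rewrite {1}/coord insubT; first by apply: ltn_trans jk.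
move=> jk' /=; rewrite /weak_shift /weak_shift_like /=.
rewrite (ltn_trans (ltnSn _) jk) (ltn_eqF jk) (ltn_eqF (ltn_trans (ltnSn _) jk)).
by rewrite addr0.
Qed.

Lemma cw_k2 z : coord (weak_shift d a0 al z) k.-2 = coord z k.-1 + coord z 1 ^+ d.-1.
Proof.
have e1 : k.-2.+1 = k.-1 by case: k k3 => [|[|[|]]].
have e2 : k.-2.+2 = k by case: k k3 => [|[|[|]]].
have kk : (k.-2 < k)%N by case: k k3 => [|[|[|]]].
rewrite {1}/coord insubT /= /weak_shift /weak_shift_like /= e2 eqxx.
by rewrite leqnn e1.
Qed.

Lemma cw_k1 z : coord (weak_shift d a0 al z) k.-1 =
  a0 * coord z 0 + pval al z + \sum_(1 <= j < k) coord z j ^+ d.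
Proof.
have kk : (k.-1 < k)%N by case: k k3.
have e1 : k.-1.+1 = k by case: k k3.
rewrite {1}/coord insubT /= /weak_shift /weak_shift_like /= e1 ltnn eqxx.
by rewrite (gtn_eqF (ltnSn k)).
Qed.


End Coords.
Definition Xn (R : realType) (k : nat) (z : 'I_k -> (R[i])^o) : R :=
  Num.max 1 (sup_norm z).

Arguments Xn {R k}.

Section Bounds.
Variable R : realType.
Local Notation nc := (@ComplexField.Normc.normc R).
Variables (k d dt : nat).
Variable Mt : R.
Hypothesis Mt0 : 0 < Mt.
Variables (a0 : (R[i])^o) (al : {ffun 'I_k.-1 -> 'I_dt.+1} -> (R[i])^o).
Hypothesis al_le : forall e, nc (al e) < Mt.
Hypothesis wsd : ws_deg a0 al = dt.
Implicit Types z : 'I_k -> (R[i])^o.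

Lemma sum_const_card (T : finType) (c : R) : \sum_(e : T) c = #|T|%:R * c.
Proof. by rewrite sumr_const mulr_natl. Qed.

Definition Ncard : R := #|{ffun 'I_k.-1 -> 'I_dt.+1}|%:R.

Lemma Xn_ge1 z : 1 <= Xn z.
Proof. by rewrite /Xn le_max lexx. Qed.

Lemma coord_le_X z j : nc (coord z j) <= Xn z.
Proof. by apply: le_trans (coord_le_sup z j) _; rewrite /Xn le_max lexx orbT. Qed.

Lemma pval_bound z : nc (pval al z) <= Ncard * Mt * Xn z ^+ dt.
Proof.
have X1 := Xn_ge1 z.
have h : forall e, nc (al e * \prod_(i : 'I_k.-1) coord z (val i).+1 ^+ e i)
    <= Mt * Xn z ^+ dt.
  move=> e; rewrite ncM nc_prod.
  have [->|ne] := eqVneq (al e) 0.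
    rewrite nc0 mul0r; apply: mulr_ge0; first exact: ltW.
    by apply: exprn_ge0; apply: le_trans X1.
  have hs : (\sum_(i : 'I_k.-1) val (e i) <= dt)%N.
    have := leq_maxr (if a0 != 0%R then 1%N else 0%N)
      (\max_(e | al e != 0) \sum_(i : 'I_k.-1) val (e i)).
    rewrite -/(ws_deg a0 al) wsd; apply: leq_trans.
    exact: (@leq_bigmax_cond _ (fun e => al e != 0) (fun e => \sum_(i : 'I_k.-1) val (e i)) e ne).
  apply: ler_pM.
  - exact: nc_ge0.
  - by apply: prodr_ge0 => i _; rewrite ncX; apply: exprn_ge0; apply: nc_ge0.
  - exact: ltW.
  apply: (@le_trans _ _ (\prod_(i : 'I_k.-1) Xn z ^+ e i)).
    apply: ler_prod => i _; rewrite ncX exprn_ge0 ?nc_ge0 //=.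
    by apply: lerXn2r; rewrite ?nnegrE ?nc_ge0 ?coord_le_X //; apply: le_trans X1.
  rewrite -(big_morph (fun n : nat => Xn z ^+ n) (exprD (Xn z)) (expr0 (Xn z))).
  by apply: ler_weXn2l.
rewrite /pval; apply: le_trans (nc_sum _ _ _) _.
apply: le_trans (ler_sum _ (fun e _ => h e)) _.
by rewrite sum_const_card /Ncard mulrA.
Qed.

End Bounds.
Definition deltaK (R : realType) (k : nat) : R := (4 * k%:R)^-1.
Definition R0K (R : realType) (k dt : nat) (Mt : R) : R :=
  16 * k%:R + 4 * (1 + Ncard R k dt) * Mt + 2.
Definition inT (R : realType) (k dt : nat) (Mt : R) (z : 'I_k -> (R[i])^o) : Prop :=
  R0K k dt Mt <= ComplexField.Normc.normc (coord z k.-1) /\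
  forall j, (j < k.-1)%N ->
    ComplexField.Normc.normc (coord z j) <= deltaK R k * ComplexField.Normc.normc (coord z k.-1).

Lemma X_le_Xn (R : realType) (x : R) n : 1 <= x -> (0 < n)%N -> x <= x ^+ n.
Proof. by move=> x1 n0; rewrite -{1}(expr1 x); apply: ler_weXn2l. Qed.

Section Core.
Variable R : realType.
Local Notation nc := (@ComplexField.Normc.normc R).
Variables (k d dt : nat).
Hypotheses (k3 : (3 <= k)%N) (ddt : (dt.+2 <= d)%N) (dt1 : (1 <= dt)%N).
Variable Mt : R.
Hypothesis Mt0 : 0 < Mt.
Variables (a0 : (R[i])^o) (al : {ffun 'I_k.-1 -> 'I_dt.+1} -> (R[i])^o).
Hypothesis a0_le : nc a0 < Mt.
Hypothesis al_le : forall e, nc (al e) < Mt.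
Hypothesis wsd : ws_deg a0 al = dt.
Implicit Types z : 'I_k -> (R[i])^o.
Local Notation W z := (weak_shift d a0 al z).
Local Notation N := (Ncard R k dt).

Lemma N0 : 0 <= N. Proof. exact: ler0n. Qed.

Lemma d3 : (3 <= d)%N. Proof. exact: (leq_trans (dt1 : (3 <= dt.+2)%N) ddt). Qed.

Lemma low_bound z j : (j < k.-1)%N -> nc (coord (W z) j) <= 2 * Xn z ^+ d.-1.
Proof.
move=> jk; have X1 := Xn_ge1 z.
have dd : (0 < d.-1)%N by case: d d3 => [|[|]].
have hX : Xn z <= Xn z ^+ d.-1 by apply: X_le_Xn.
have hX0 : 0 <= Xn z ^+ d.-1 by apply: exprn_ge0; apply: le_trans X1.
case: (ltnP j.+1 k.-1) => h.
  have jk2 : (j.+2 < k)%N by case: k k3 h => [|n]//= _; rewrite ltnS.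
  rewrite cw_low //; apply: le_trans (coord_le_X _ _) _; lra.
have ej : j = k.-2.
  have e : j.+1 = k.-1 by apply/eqP; rewrite eqn_leq jk h.
  by rewrite -[j]/(j.+1.-1) e.
rewrite ej cw_k2 //; apply: le_trans (ncD _ _) _; rewrite ncX.
have h1 := coord_le_X z k.-1.
have h2 : nc (coord z 1) ^+ d.-1 <= Xn z ^+ d.-1.
  by apply: lerXn2r; rewrite ?nnegrE ?nc_ge0 ?coord_le_X //; apply: le_trans X1.
lra.
Qed.

Lemma sum_split (F : nat -> R[i]) :
  \sum_(1 <= j < k) F j = \sum_(1 <= j < k.-1) F j + F k.-1.
Proof.
have k0 : k = k.-1.+1 by case: k k3.
by rewrite [in LHS]k0 big_nat_recr //=; case: k k3 => [|[|[|]]].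
Qed.

Lemma top_bound z : nc (coord (W z) k.-1) <= (Mt + N * Mt + k%:R) * Xn z ^+ d.
Proof.
have X1 := Xn_ge1 z.
have X0 : 0 <= Xn z by apply: le_trans X1.
have Xd0 : 0 <= Xn z ^+ d by apply: exprn_ge0.
rewrite cw_k1 //; apply: le_trans (ncD _ _) _; apply: le_trans (lerD (ncD _ _) (lexx _)) _.
rewrite ncM.
have h1 : nc a0 * nc (coord z 0) <= Mt * Xn z ^+ d.
  apply: ler_pM; [exact: nc_ge0 | exact: nc_ge0 | exact: ltW |].
  apply: le_trans (coord_le_X _ _) _.
  by apply: X_le_Xn => //; apply: leq_trans d3.
have h2 : nc (pval al z) <= N * Mt * Xn z ^+ d.
  apply: le_trans (pval_bound Mt0 al_le wsd z) _.
  apply: ler_wpM2l; first by apply: mulr_ge0; [exact: N0 | exact: ltW].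
  by apply: ler_weXn2l => //; apply: leq_trans ddt; apply: leq_trans (leqnSn _) _.
have e : (Mt + N * Mt + k%:R) * Xn z ^+ d = Mt * Xn z ^+ d + N * Mt * Xn z ^+ d + k%:R * Xn z ^+ d.
  by ring.
rewrite e; apply: lerD; first by apply: lerD.
  apply: le_trans (nc_sum _ _ _) _.
  apply: le_trans (_ : \sum_(1 <= j < k) Xn z ^+ d <= _).
    apply: ler_sum => j _; rewrite ncX; apply: lerXn2r; rewrite ?nnegrE ?nc_ge0 //.
    exact: coord_le_X.
  rewrite sumr_const_nat -[X in X <= _]mulr_natl; apply: ler_wpM2r => //.
  by rewrite ler_nat leq_subr.

Qed.

Definition Cc : R := Mt + N * Mt + k%:R + 2.

Lemma Cc_ge1 : 1 <= Cc.
Proof. rewrite /Cc; have h0 := N0; have h1 : 0 <= N * Mt by apply: mulr_ge0; [exact: N0|exact: ltW].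
have h2 : 0 <= (k%:R : R) by []. have h3 := ltW Mt0. have h4 : 0 <= Mt + N * Mt + k%:R by rewrite !addr_ge0. lra. Qed.

Lemma L1 z : Xn (W z) <= Cc * Xn z ^+ d.
Proof.
have X1 := Xn_ge1 z.
have X0 : 0 <= Xn z by apply: le_trans X1.
have Xd1 : 1 <= Xn z ^+ d by apply: exprn_ege1.
have CX : 1 <= Cc * Xn z ^+ d.
  by rewrite -[1]mulr1; apply: ler_pM => //; apply: Cc_ge1.
rewrite {1}/Xn ge_max; apply/andP; split => //.
apply: sup_le; first by apply: le_trans CX.
move=> j jk.
have hd : Xn z ^+ d.-1 <= Xn z ^+ d by apply: ler_weXn2l => //; exact: leq_pred.
have hN : 0 <= N * Mt by apply: mulr_ge0; [exact: N0|exact: ltW].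
case: (ltnP j k.-1) => h.
  apply: le_trans (@low_bound z j h) _; rewrite /Cc.
  have : (2 : R) * Xn z ^+ d <= (Mt + N * Mt + k%:R + 2) * Xn z ^+ d.
    apply: ler_wpM2r; first by apply: le_trans Xd1.
    have h4 : 0 <= Mt + N * Mt + k%:R by rewrite !addr_ge0 // ltW.
    lra.
  move=> h3; have h4 : 0 <= Xn z ^+ d.-1 by apply: exprn_ge0.
  lra.
have -> : j = k.-1 by apply/eqP; rewrite eqn_leq h andbT -ltnS; case: k k3 jk => [|n].
apply: le_trans (top_bound z) _; apply: ler_wpM2r; first by apply: le_trans Xd1.
rewrite /Cc lerDl //.
Qed.

Local Notation dl := (deltaK R k).
Local Notation R0 := (@R0K R k dt Mt).

Lemma k0 : (0 : R) < k%:R. Proof. by rewrite ltr0n; apply: leq_trans k3. Qed.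
Lemma dl0 : 0 < dl. Proof. by rewrite /deltaK invr_gt0 mulr_gt0 // k0. Qed.
Lemma dlk : 4 * k%:R * dl = 1.
Proof. by rewrite /deltaK divff // gt_eqF // mulr_gt0 // k0. Qed.
Lemma k1 : (1 : R) <= k%:R. Proof. by rewrite ler1n; apply: leq_trans k3. Qed.
Lemma dl1 : dl <= 1.
Proof. have := dlk; have := dl0; have := k1 => h1 h2 h3. nra. Qed.
Lemma R0_ge : 16 * k%:R <= R0 /\ 4 * (1 + N) * Mt <= R0 /\ 2 <= R0.
Proof.
have h1 : 0 <= 4 * (1 + N) * Mt by rewrite !mulr_ge0 // ?addr_ge0 ?N0 // ltW.
have h2 := k1.
rewrite /R0K; split; [|split]; lra.
Qed.

Definition Dd : R := R0 + 8 * k%:R.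

Lemma Dd_ge1 : 1 <= Dd.
Proof.
have [_ [_ h]] := R0_ge; have h2 := k1.
have h3 : 0 <= 8 * (k%:R : R) by rewrite mulr_ge0 // ler0n.
rewrite /Dd; lra.
Qed.

Lemma L2 z : ~ @inT R k dt Mt (W z) -> Xn (W z) <= Dd * Xn z ^+ d.-1.
Proof.
move=> nT.
have X1 := Xn_ge1 z.
have Y1 : 1 <= Xn z ^+ d.-1 by apply: exprn_ege1.
have [hR1 [hR2 hR3]] := R0_ge.
have hk := k1.
have Dd2 : 2 <= Dd by rewrite /Dd; lra.
have DY : 2 * Xn z ^+ d.-1 <= Dd * Xn z ^+ d.-1.
  by apply: ler_wpM2r => //; apply: le_trans Y1.
have top : nc (coord (W z) k.-1) <= Dd * Xn z ^+ d.-1.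
  case: (ltP (nc (coord (W z) k.-1)) R0) => hR.
    apply: le_trans (ltW hR) _; rewrite -[R0]mulr1 /Dd.
    apply: ler_pM => //; first by lra.
    by rewrite lerDl mulr_ge0 // ltW // k0.
  have [j [jk hj]] : exists j, (j < k.-1)%N /\ dl * nc (coord (W z) k.-1) < nc (coord (W z) j).
    apply: contrapT => H; apply: nT; split => // j jk; rewrite leNgt; apply/negP => hj.
    by apply: H; exists j.
  have hb := @low_bound z j jk.
  move: hj; rewrite /deltaK mulrC ltr_pdivrMr; last by rewrite mulr_gt0 // k0.
  move=> hj.
  have : nc (coord (W z) j) * (4 * k%:R) <= 2 * Xn z ^+ d.-1 * (4 * k%:R).
    by apply: ler_wpM2r => //; rewrite mulr_ge0 // ltW // k0.
  have e : 2 * Xn z ^+ d.-1 * (4 * k%:R) = 8 * k%:R * Xn z ^+ d.-1 by ring.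
  rewrite e => h.
  have : 8 * k%:R * Xn z ^+ d.-1 <= Dd * Xn z ^+ d.-1.
    by apply: ler_wpM2r; [apply: le_trans Y1 | rewrite /Dd lerDr; lra].
  lra.
rewrite {1}/Xn ge_max; apply/andP; split; first by lra.
apply: sup_le; first by lra.
move=> j jk; case: (ltnP j k.-1) => h.
  by apply: le_trans (@low_bound z j h) _.
have -> : j = k.-1 by apply/eqP; rewrite eqn_leq h andbT -ltnS; case: k k3 jk => [|n].
exact: top.
Qed.

Lemma L3 z : @inT R k dt Mt z ->
  let U := nc (coord z k.-1) in
  [/\ @inT R k dt Mt (W z), sup_norm z = U, Xn z = U,
     U ^+ d / 2 <= nc (coord (W z) k.-1) <= 2 * U ^+ d &
     forall j, (j < k.-1)%N -> nc (coord (W z) j) <= 2 * U ^+ d.-1].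
Proof.
move=> [hU hlow] U.
have [hR1 [hR2 hR3]] := R0_ge.
have hk := k1.
have hdl := dl1.
have hdl0 := dl0.
have hUR : R0 <= U := hU.
have U1 : 1 <= U by lra.
have U0 : 0 <= U by lra.
have hsup : sup_norm z = U.
  apply/le_anti/andP; split; last exact: coord_le_sup.
  apply: sup_le => // j jk; case: (ltnP j k.-1) => h.
    apply: le_trans (hlow j h) _; rewrite -[X in _ <= X]mul1r.
    by apply: ler_wpM2r.
  by have -> : j = k.-1 by apply/eqP; rewrite eqn_leq h andbT -ltnS; case: k k3 jk => [|n].
have hX : Xn z = U by rewrite /Xn hsup max_r.
have lowW : forall j, (j < k.-1)%N -> nc (coord (W z) j) <= 2 * U ^+ d.-1.
  by move=> j jk; rewrite -hX; apply: low_bound.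
set u := coord z k.-1.
have eW : coord (W z) k.-1 - u ^+ d =
    a0 * coord z 0 + pval al z + \sum_(1 <= j < k.-1) coord z j ^+ d.
  by rewrite cw_k1 // sum_split addrA addrK.
have dd2 : (1 <= d.-2)%N by case: d ddt dt1 => [|[|[|n]]] //; case: dt => [|[|]].
have ed : d = (d.-2 + 2)%N.
  by rewrite addn2; case: d ddt dt1 => [|[|[|n]]] //; case: dt => [|[|]].
set V := U ^+ d.-2.
have V1 : U <= V by apply: X_le_Xn.
have UdV : U ^+ d = U ^+ 2 * V by rewrite [in LHS]ed exprD mulrC.
have E1 : nc (a0 * coord z 0) <= Mt * V.
  rewrite ncM; apply: ler_pM; [exact: nc_ge0|exact: nc_ge0|exact: ltW|].
  by apply: le_trans V1; rewrite -hX; apply: coord_le_X.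
have E2 : nc (pval al z) <= N * Mt * V.
  apply: le_trans (pval_bound Mt0 al_le wsd z) _; rewrite hX.
  apply: ler_wpM2l; first by apply: mulr_ge0; [exact: N0 | exact: ltW].
  by apply: ler_weXn2l => //; rewrite -ltnS -ltnS; case: d ddt => [|[|n]].
have E3 : nc (\sum_(1 <= j < k.-1) coord z j ^+ d) <= U ^+ d / 4.
  apply: le_trans (nc_sum _ _ _) _.
  apply: le_trans (_ : \sum_(1 <= j < k.-1) dl * U ^+ d <= _).
    apply: ler_sum_nat => j /andP[_ jk]; rewrite ncX.
    apply: le_trans (_ : (dl * U) ^+ d <= _).
      apply: lerXn2r; rewrite ?nnegrE ?nc_ge0 ?hlow //.
      by rewrite mulr_ge0 // ltW.
    rewrite exprMn; apply: ler_wpM2r; first by apply: exprn_ge0.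
    rewrite -[X in _ <= X]expr1; apply: ler_wiXn2l => //; first exact: ltW.
    by apply: leq_trans d3.
  rewrite sumr_const_nat -[X in X <= _]mulr_natl.
  have : ((k.-1 - 1)%:R : R) <= k%:R by rewrite ler_nat; apply: leq_trans (leq_subr _ _) (leq_pred _).
  move=> hkk.
  have Ud0 : 0 <= U ^+ d by apply: exprn_ge0.
  have hh : (k.-1 - 1)%:R * (dl * U ^+ d) <= k%:R * (dl * U ^+ d).
    by apply: ler_wpM2r => //; rewrite mulr_ge0 // ltW.
  have e : k%:R * (dl * U ^+ d) = (4 * k%:R * dl) * U ^+ d / 4 by field.
  by rewrite e dlk mul1r in hh.
have E4 : (1 + N) * Mt * V <= U ^+ 2 / 4 * V.
  apply: ler_wpM2r; first by lra.
  have : U <= U ^+ 2 by apply: X_le_Xn.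
  lra.
have EE : nc (coord (W z) k.-1 - u ^+ d) <= U ^+ d / 2.
  rewrite eW; apply: le_trans (ncD _ _) _; apply: le_trans (lerD (ncD _ _) (lexx _)) _.
  have e : (1 + N) * Mt * V = Mt * V + N * Mt * V by ring.
  rewrite UdV in E3 *; lra.
have ncu : nc (u ^+ d) = U ^+ d by rewrite ncX.
have T1 : U ^+ d / 2 <= nc (coord (W z) k.-1).
  have := ncD (coord (W z) k.-1) (u ^+ d - coord (W z) k.-1).
  rewrite addrC subrK ncu.
  have -> : nc (u ^+ d - coord (W z) k.-1) = nc (coord (W z) k.-1 - u ^+ d).
    by rewrite -normcN opprB.
  lra.
have T2 : nc (coord (W z) k.-1) <= 2 * U ^+ d.
  have := ncD (coord (W z) k.-1 - u ^+ d) (u ^+ d).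
  rewrite subrK ncu.
  have : 0 <= U ^+ d by apply: exprn_ge0.
  lra.
split; [ | exact: hsup | exact: hX | by apply/andP; split | exact: lowW].
have Ud1 : U ^+ d = U * U ^+ d.-1.
  by rewrite -exprS; case: d d3 => [|n].
have Y1 : U <= U ^+ d.-1 by apply: X_le_Xn => //; case: d d3 => [|[|n]].
have hUY : 2 * U <= U * U ^+ d.-1.
  apply: le_trans (_ : U * U <= _); last by apply: ler_wpM2l.
  by apply: ler_wpM2r; lra.
split.
  rewrite -/u; lra.
move=> j jk; apply: le_trans (lowW j jk) _.
have : 16 * k%:R * U ^+ d.-1 <= U * U ^+ d.-1.
  apply: ler_wpM2r; [apply: exprn_ge0 | ]; lra.
have : dl * (U ^+ d / 2) <= dl * nc (coord (W z) k.-1).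
  by apply: ler_wpM2l => //; apply: ltW.
have e : dl * (U ^+ d / 2) = (4 * k%:R * dl) * (U * U ^+ d.-1) / (8 * k%:R).
  have kn0 : (k%:R : R) != 0 by rewrite gt_eqF // k0.
  have dn0 : dl != 0 by rewrite gt_eqF // dl0.
  by rewrite Ud1; field; rewrite ?kn0 ?dn0.
rewrite e dlk mul1r => h1 h2.
have : 2 * U ^+ d.-1 = (16 * k%:R * U ^+ d.-1) / (8 * k%:R).
  have kn0 : (k%:R : R) != 0 by rewrite gt_eqF // k0.
  by field; rewrite ?kn0.
move=> e2; rewrite e2; apply: (le_trans _ h1).
by rewrite ler_pM2r // invr_gt0 mulr_gt0 // k0.
Qed.

End Core.
Section Misc.
Local Open Scope complex_scope.
Local Open Scope ring_scope.
Variable R : realType.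
Local Notation nc := (@ComplexField.Normc.normc R).

Lemma logp_Xn (k : nat) (z : 'I_k -> (R[i])^o) : logp (sup_norm z) = ln (Xn z).
Proof.
rewrite /logp /Xn; case: (leP 1 (sup_norm z)) => h.
  by rewrite max_l ?ln_ge0 // max_r.
have h1 : Num.max 1 (sup_norm z) = 1 by rewrite max_l // ltW.
by rewrite ln1 max_r //; apply: ln_le0; apply: ltW.
Qed.

Lemma nc_norm (x : R[i]) : `|x| = (nc x)%:C.
Proof. by case: x => a b; rewrite normc_def. Qed.

Lemma nc_norm_lt (x e : R[i]) : 0 < e -> (`|x| < e) = (nc x < complex.Re e).
Proof.
rewrite nc_norm !ltcE /= => /andP[/eqP <- _]; by rewrite eqxx.
Qed.

Lemma cvg0_of_nc (f : nat -> (R[i])^o) :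
  (forall e : R, 0 < e -> \forall n \near \oo, nc (f n) < e) -> f @ \oo --> 0.
Proof.
move=> H; apply/cvgr0Pnorm_lt => e e0.
have e0' : 0 < complex.Re e by move: e0; rewrite ltcE /= => /andP[_ ->].
apply: filterS (H _ e0') => n /= h.
by rewrite nc_norm_lt.
Qed.

Lemma compact_bound1 (A : set (R[i])^o) :
  compact A -> exists B : R, 0 <= B /\ forall x, A x -> nc x <= B.
Proof.
rewrite compact_cover => Kc.
pose f := fun M : nat => [set x : (R[i])^o | nc x < M%:R].
have fo : forall M, setT M -> open (f M).
  move=> M _; rewrite openE => z /= hz.
  have := @cvg_id _ (nbhs z).
  move/cvgr_dist_lt => /(_ ((M%:R - nc z)%:C)).
  have ep : 0 < ((M%:R - nc z)%:C : R[i]) by rewrite ltcR subr_gt0.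
  move=> /(_ ep); apply: filterS => g /=.
  rewrite nc_norm ltcR => hg.
  have := ncD z (g - z); rewrite [z + (g - z)]addrC subrK.
  have -> : nc (g - z) = nc (z - g) by rewrite -normcN opprB.
  move=> hh; clear ep; move: hz; rewrite /f /= => hz; lra.
have cov : A `<=` \bigcup_(M in setT) f M.
  by move=> z _; exists (Num.truncn (nc z)).+1 => //=; apply: truncnS_gt.
have [D _ DK] := Kc _ _ _ fo cov.
exists ((\max_(M <- finmap.enum_fset D) M)%:R); split; first exact: ler0n.
move=> z /DK [M MD /= hM]; apply: le_trans (ltW hM) _.
rewrite ler_nat; exact: leq_bigmax_seq.
Qed.

Lemma compact_bound (k : nat) (K : set {ptws 'I_k -> (R[i])^o}) :
  compact K -> exists B : R, 1 <= B /\ forall z, K z -> Xn z <= B.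
Proof.
move=> Kc.
have hi : forall i : 'I_k, exists B : R, 0 <= B /\ forall z, K z -> nc (z i) <= B.
  move=> i.
  have := @continuous_compact {ptws 'I_k -> (R[i])^o} (R[i])^o (@proj 'I_k (fun _ => (R[i])^o) i) K.
  have hc : {within K, continuous (@proj 'I_k (fun _ => (R[i])^o) i)}.
    by apply: continuous_subspaceT; apply: proj_continuous.
  move=> /(_ hc Kc) /compact_bound1.
  move=> [B [B0 hB]]; exists B; split => // z Kz; apply: hB; by exists z.
have [Bf hBf] := boolp.choice hi.
exists (1 + \big[Num.max/0]_(i : 'I_k) Bf i); split.
  by rewrite lerDl; apply: bigmax_ge_id.
move=> z Kz; rewrite /Xn ge_max; apply/andP; split.
  by rewrite lerDl; apply: bigmax_ge_id.
apply: sup_le; first by apply: addr_ge0 => //; apply: bigmax_ge_id.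
move=> j jk; rewrite -[j]/(val (Ordinal jk)) coord_ord.
apply: le_trans (proj2 (hBf (Ordinal jk)) z Kz) _.
have h2 : Bf (Ordinal jk) <= \big[Num.max/0]_(i : 'I_k) Bf i by apply: le_bigmax.
have h1 : 0 <= \big[Num.max/0]_(i : 'I_k) Bf i by apply: bigmax_ge_id.
lra.
Qed.

End Misc.
Lemma ln_le (R : realType) (x y : R) : 0 < x -> x <= y -> ln x <= ln y.
Proof. by move=> x0 xy; rewrite ler_ln // posrE; apply: lt_le_trans xy. Qed.

Section Orbit.
Variable R : realType.
Local Notation nc := (@ComplexField.Normc.normc R).
Variables (k d dt : nat) (a : nat -> (R[i])^o)
  (alpha : nat -> {ffun 'I_k.-1 -> 'I_dt.+1} -> (R[i])^o) (Mt : R).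
Hypotheses (k3 : (3 <= k)%N) (dt1 : (1 <= dt)%N) (ddt : (dt.+2 <= d)%N) (Mt0 : 0 < Mt).
Hypothesis ha : forall n, (0 < n)%N -> nc (a n) < Mt.
Hypothesis hal : forall n e, (0 < n)%N -> nc (alpha n e) < Mt.
Hypothesis hws : forall n, (0 < n)%N -> ws_deg (a n) (alpha n) = dt.
Variable z0 : 'I_k -> (R[i])^o.
Local Notation S := (fun n => weak_shift d (a n) (alpha n)).
Local Notation zn n := (comp_seq S n z0).
Local Notation T := (@inT R k dt Mt).

Lemma zS n : zn n.+1 = weak_shift d (a n.+1) (alpha n.+1) (zn n).
Proof. by []. Qed.

Lemma T_step n : T (zn n) -> T (zn n.+1).
Proof.
move=> h; rewrite zS.
by have [] := L3 k3 ddt dt1 Mt0 (ha (ltn0Sn n)) (hal (n := n.+1) ^~ (ltn0Sn n)) (hws (ltn0Sn n)) h.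
Qed.

Local Notation C1 := (Cc k dt Mt).
Local Notation D1 := (Dd k dt Mt).

Lemma hL3 n : T (zn n) ->
  [/\ T (zn n.+1), sup_norm (zn n) = nc (coord (zn n) k.-1),
     Xn (zn n) = nc (coord (zn n) k.-1),
     nc (coord (zn n) k.-1) ^+ d / 2 <= nc (coord (zn n.+1) k.-1) <= 2 * nc (coord (zn n) k.-1) ^+ d &
     forall j, (j < k.-1)%N -> nc (coord (zn n.+1) j) <= 2 * nc (coord (zn n) k.-1) ^+ d.-1].
Proof.
move=> h; rewrite zS.
exact: (L3 k3 ddt dt1 Mt0 (ha (ltn0Sn n)) (hal (n := n.+1) ^~ (ltn0Sn n)) (hws (ltn0Sn n)) h).
Qed.

Lemma orbit_main : exists L : R,
  (fun n => Gn S d n z0) @ \oo --> L /\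
  (forall n, `|Gn S d n z0 - L| <=
     ((d%:R - 1) / d%:R) ^+ n * (ln (Xn z0) + ln C1 + ln D1 + ln 2)) /\
  (~ (exists n, T (zn n)) -> L = 0).
Proof.
have d3 : (3 <= d)%N by exact: (leq_trans (dt1 : (3 <= dt.+2)%N) ddt).
have C1g : 1 <= C1 by apply: Cc_ge1.
have D1g : 1 <= D1 by apply: Dd_ge1.
have Xpos (z : 'I_k -> (R[i])^o) : 0 < Xn z by apply: lt_le_trans (Xn_ge1 z).
have lnXd (z : 'I_k -> (R[i])^o) n : ln (Xn z ^+ n) = n%:R * ln (Xn z) by rewrite lnXn // mulr_natl.
have := @seq_main R d (fun n => ln (Xn (zn n))) (fun n => `[< T (zn n) >])
  (ln C1) (ln D1) (ln 2) d3 (ln_ge0 C1g) (ln_ge0 D1g) (ln_ge0 (ler1n R 2)).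
case.
- by move=> n; apply: ln_ge0; apply: Xn_ge1.
- by move=> n /asboolP h; apply/asboolP; apply: T_step.
- move=> n /asboolP h.
  have [hT1 hsup hX /andP[hlo hhi] hlow] := hL3 h.
  have [_ _ hX' _ _] := hL3 hT1.
  rewrite /= hX hX'.
  set U := nc (coord (zn n) k.-1) in hlo hhi *.
  set V := nc (coord (zn n.+1) k.-1) in hlo hhi *.
  have U1 : 1 <= U by rewrite /U -hX; apply: Xn_ge1.
  have U0 : 0 < U by lra.
  have Ud0 : 0 < U ^+ d by apply: exprn_gt0.
  have l1 : ln V <= ln 2 + d%:R * ln U.
    apply: le_trans (ln_le _ hhi) _; first by apply: lt_le_trans hlo; rewrite divr_gt0.
    by rewrite lnM ?posrE ?mulr_gt0 // lnXn // mulr_natl.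
  have l2 : d%:R * ln U - ln 2 <= ln V.
    apply: le_trans (ln_le _ hlo); last by rewrite divr_gt0.
    by rewrite ln_div ?posrE // lnXn // mulr_natl.
  rewrite ler_norml; apply/andP; split; lra.
- move=> n /asboolP hn.
  have := L2 k3 ddt dt1 Mt0 (a0 := a n.+1) (al := alpha n.+1) (z := zn n) hn.
  rewrite -zS => h; rewrite /= -zS.
  apply: le_trans (ln_le (Xpos _) h) _.
  rewrite lnM ?posrE ?mulr_gt0 ?exprn_gt0 //; last by apply: lt_le_trans D1g.
  rewrite lnXd -subn1 natrB //; by case: d d3.
- move=> n; have := L1 k3 ddt dt1 Mt0 (ha (ltn0Sn n)) (hal (n := n.+1) ^~ (ltn0Sn n)) (hws (ltn0Sn n)) (zn n).
  rewrite -zS => h; rewrite /= -zS.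
  apply: le_trans (ln_le (Xpos _) h) _.
  rewrite lnM ?posrE ?mulr_gt0 ?exprn_gt0 //; last by apply: lt_le_trans C1g.
  by rewrite lnXd.
move=> L [cv [bd z0L]]; exists L; split; last split.
- apply: cvg_trans cv; apply: near_eq_cvg; apply: nearW => n /=.
  by rewrite /Gn logp_Xn.
- by move=> n; rewrite /Gn logp_Xn; apply: bd.
- move=> nT; apply: z0L => n; apply/asboolP => h; apply: nT; by exists n.
Qed.

Local Notation U m := (nc (coord (zn m) k.-1)).

Lemma inv_small (x e : R) (M : nat) : 0 < e -> (Num.truncn (x / e)).+1 = M ->
  forall y : R, M%:R <= y -> 0 <= x -> x / y < e.
Proof.
move=> e0 hM y hy x0.
have h1 : x / e < M%:R by rewrite -hM; apply: truncnS_gt.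
have y0 : 0 < y by apply: lt_le_trans hy; apply: le_lt_trans h1; rewrite divr_ge0 // ltW.
rewrite ltr_pdivrMr //; rewrite ltr_pdivrMr // in h1.
have : M%:R * e <= y * e by apply: ler_wpM2r => //; apply: ltW.
lra.
Qed.

Lemma orbit_Uplus : (exists n, T (zn n)) -> Uplus S z0.
Proof.
move=> [n0 h0].
have d3 : (3 <= d)%N by exact: (leq_trans (dt1 : (3 <= dt.+2)%N) ddt).
have Tall : forall i, T (zn (i + n0)%N).
  elim => [|i IH] //; rewrite addSn; exact: T_step.
have R04 : 4 <= @R0K R k dt Mt.
  rewrite /R0K.
  have : (3 : R) <= k%:R by rewrite (ler_nat R 3 k).
  have : 0 <= 4 * (1 + Ncard R k dt) * Mt by rewrite !mulr_ge0 ?addr_ge0 ?ler0n // ltW.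
  lra.
have U4 : forall i, 4 <= U (i + n0)%N.
  by move=> i; have [h _] := Tall i; lra.
have Ustep : forall i, U (i + n0)%N + 1 <= U (i + n0)%N.+1.
  move=> i; have [_ _ _ /andP[hlo _] _] := hL3 (Tall i).
  apply: le_trans hlo.
  set u := U (i + n0)%N.
  have u4 : 4 <= u by apply: U4.
  have : u ^+ 2 <= u ^+ d by apply: ler_weXn2l; [lra | apply: leq_trans d3].
  rewrite expr2 => h.
  have : 4 * u <= u * u by apply: ler_wpM2r; lra.
  move=> h2; rewrite ler_pdivlMr //; lra.
have Ugrow : forall i, (i%:R : R) + 1 <= U (i + n0)%N.
  elim => [|i IH]; first by rewrite add0r; have := U4 0%N; lra.
  have := Ustep i; rewrite -addSn mulrS; lra.
have ratio : forall i j, (j < k.-1)%N ->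
    nc (coord (zn (i + n0).+1) j / coord (zn (i + n0).+1) k.-1) <= 4 / U (i + n0)%N.
  move=> i j jk; have [_ _ _ /andP[hlo _] hlow] := hL3 (Tall i).
  have := hlow j jk; move: hlo.
  rewrite ncM ComplexField.Normc.normcV.
  set u := U (i + n0)%N; set v := U (i + n0).+1; set x := nc (coord _ j).
  move=> hlo hx.
  have u4 : 4 <= u by apply: U4.
  have ud : u ^+ d = u * u ^+ d.-1 by rewrite -exprS; case: d d3.
  have Y0 : 0 < u ^+ d.-1 by apply: exprn_gt0; lra.
  have v0 : 0 < v by apply: lt_le_trans hlo; rewrite divr_gt0 // exprn_gt0 //; lra.
  rewrite ler_pdivlMr; last by lra.
  rewrite -mulrA mulrC -mulrA ler_pdivrMl //.
  rewrite ud in hlo.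
  have : x * u <= 2 * u ^+ d.-1 * u by apply: ler_wpM2r => //; lra.
  have : 4 * (u * u ^+ d.-1 / 2) <= 4 * v by apply: ler_wpM2l => //.
  have e : 4 * (u * u ^+ d.-1 / 2) = 2 * u ^+ d.-1 * u by field.
  rewrite e => h1 h2.
  rewrite mulrC; lra.
split; [|split].
- apply: filterS (nbhs_infty_ge n0) => n hn.
  have := Ugrow (n - n0)%N; rewrite subnK // => h.
  apply/eqP => e; move: h; rewrite e nc0; have := ler0n R (n - n0); lra.
- move=> j jk; apply: cvg0_of_nc => e e0.
  have jk' : (val j < k.-1)%N.
    have kp : (0 < k)%N by apply: leq_trans k3.
    have hj : (val j < k.-1.+1)%N by rewrite prednK // ltn_ord.
    by move: hj; rewrite ltnS leq_eqVlt (negbTE jk).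
  pose M := (Num.truncn (4 / e)).+1.
  apply: filterS (nbhs_infty_ge (M + n0).+1) => n hn.
  have hn' : n = ((n.-1 - n0) + n0).+1.
    by lia.
  rewrite hn' -(coord_ord (zn _) j).
  apply: le_lt_trans (ratio _ _ jk') _.
  apply: (inv_small e0 (erefl M)); last by [].
  apply: le_trans (Ugrow _); apply: le_trans (_ : ((n.-1 - n0)%N%:R : R) <= _); last by lra.
  rewrite ler_nat; lia.
- apply: cvg0_of_nc => e e0.
  pose M := (Num.truncn (1 / e)).+1.
  apply: filterS (nbhs_infty_ge (M + n0)) => n hn.
  rewrite -(subnK (leq_trans (leq_addl _ _) hn)) ComplexField.Normc.normcV -div1r.
  apply: (inv_small e0 (erefl M)); last by [].
  apply: le_trans (Ugrow _); apply: le_trans (_ : ((n - n0)%N%:R : R) <= _); last by lra.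
  rewrite ler_nat; lia.
Qed.

End Orbit.
Unset Implicit Arguments.

Theorem lemma3p9 (R : realType) (k d dt : nat) (a : nat -> (R[i])^o)
  (alpha : nat -> {ffun 'I_k.-1 -> 'I_dt.+1} -> (R[i])^o) (mt Mt : R) :
  (3 <= k)%N -> (1 <= dt)%N -> (dt.+2 <= d)%N ->
  0 < mt -> 0 < Mt ->
  (forall n, (0 < n)%N -> mt < ComplexField.Normc.normc (a n) < Mt) ->
  (forall n e, (0 < n)%N -> ComplexField.Normc.normc (alpha n e) < Mt) ->
  (forall n, (0 < n)%N -> ws_deg (a n) (alpha n) = dt) ->
  let S := fun n => weak_shift d (a n) (alpha n) in
  forall K : set {ptws 'I_k -> (R[i])^o}, compact K ->
  forall eps : R, 0 < eps ->
  \forall n \near \oo, forall z : 'I_k -> (R[i])^o, K z -> `|Gn S d n z - Glim S d z| < eps.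
Proof.
move=> k3 dt1 ddt mt0 Mt0 hamt hal hws S K Kc eps eps0.
have ha : forall n, (0 < n)%N -> ComplexField.Normc.normc (a n) < Mt.
  by move=> n n0; have /andP[_ h] := hamt n n0.
have d3 : (3 <= d)%N by exact: (leq_trans (dt1 : (3 <= dt.+2)%N) ddt).
have [B [B1 hB]] := compact_bound Kc.
set Wb := ln B + ln (Cc k dt Mt) + ln (Dd k dt Mt) + ln 2.
set rho : R := (d%:R - 1) / d%:R.
have D3 : (3 : R) <= d%:R by rewrite (ler_nat R 3 d).
have rho0 : 0 <= rho by rewrite /rho divr_ge0 //; lra.
have rho1 : rho < 1 by rewrite /rho ltr_pdivrMr //; lra.
have cv : (fun n => rho ^+ n * Wb) @ \oo --> 0.
  rewrite -(mul0r Wb); apply: cvgMr_tmp; apply: cvg_expr.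
  by rewrite ger0_norm.
apply: filterS (cvgr0_norm_lt _ cv _ eps0) => n /= hn z Kz.
have [L [cvL [bd L0]]] := orbit_main k3 dt1 ddt Mt0 ha hal hws z.
have GL : Glim S d z = L.
  rewrite /Glim; case: asboolP => hU.
    exact: cvg_lim.
  apply/esym; apply: L0 => hex; apply: hU; exact: (orbit_Uplus k3 dt1 ddt Mt0 ha hal hws hex).
rewrite GL; apply: le_lt_trans (bd n) _.
apply: le_lt_trans hn; rewrite /rho.
have hX : ln (Xn z) <= ln B.
  apply: ln_le; [apply: lt_le_trans (Xn_ge1 z) | exact: hB].
  by [].
apply: le_trans (_ : rho ^+ n * Wb <= _); last exact: ler_norm.
apply: ler_wpM2l; first exact: exprn_ge0.
rewrite /Wb; lra.
Qed.
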